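(* Let $\phi$ be a modal formula and $\Psi$ the set of its subformulas. If $\phi$ is satisfiable in the frame $(\mathbb{R},R_{>1})$ under some valuation, then $\phi$ is satisfiable in $(\mathbb{R},R_{>1})$ under a special valuation (with respect to $\Psi$).
   Context: Modal formulas are built from propositional variables using $\bot$, $\to$ and one unary modality $\lozenge$. In the frame $(\mathbb{R},R_{>1})$, $xR_{>1}y$ iff $|x-y|>1$. A valuation $v$ assigns subsets of $\mathbb{R}$ to variables and extends to $\overline{v}(\varphi)=\{x: x\models_v\varphi\}$, where $x\models_v\lozenge\varphi$ iff some $y$ with $|x-y|>1$ satisfies $\varphi$. A formula is satisfiable under $v$ if $\overline{v}(\phi)\ne\emptyset$. For a valuation $v$, let $B_v$ be the Boolean subalgebra of the powerset of $\mathbb{R}$ generated by $\{\overline{v}(\psi):\psi\in\Psi\}$, and let $X_v$ be the set of all real numbers that arise as infima or suprema of members of $B_v$. The valuation $v$ is called special if $X_v\subseteq\mathbb{Q}$. *)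

(* Defs.v *)
From Stdlib Require Import Reals QArith.
Open Scope R_scope.

Inductive form : Type :=
| Var : nat -> form
| Bot : form
| Imp : form -> form -> form
| Dia : form -> form.

Definition valuation := nat -> R -> Prop.

Definition Rgt1 (x y : R) : Prop := Rabs (x - y) > 1.

Fixpoint ext (v : valuation) (phi : form) : R -> Prop :=
  match phi with
  | Var n => v n
  | Bot => fun _ => False
  | Imp a b => fun x => ext v a x -> ext v b x
  | Dia a => fun x => exists y, Rgt1 x y /\ ext v a y
  end.

Definition satisfiable (v : valuation) (phi : form) : Prop :=
  exists x, ext v phi x.

Inductive subform : form -> form -> Prop :=
| sub_refl : forall phi, subform phi phi
| sub_impl : forall a b psi, subform psi a -> subform psi (Imp a b)
| sub_impr : forall a b psi, subform psi b -> subform psi (Imp a b)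
| sub_dia  : forall a psi, subform psi a -> subform psi (Dia a).

(* B_v: the Boolean subalgebra of the powerset of R generated by
   the truth sets of the formulas in Psi. *)
Inductive inB (Psi : form -> Prop) (v : valuation) : (R -> Prop) -> Prop :=
| inB_gen : forall psi, Psi psi -> inB Psi v (ext v psi)
| inB_empty : inB Psi v (fun _ => False)
| inB_compl : forall S, inB Psi v S -> inB Psi v (fun x => ~ S x)
| inB_union : forall S T, inB Psi v S -> inB Psi v T ->
                inB Psi v (fun x => S x \/ T x).

Definition is_lower_bound (S : R -> Prop) (m : R) : Prop :=
  forall x, S x -> m <= x.
Definition is_glb (S : R -> Prop) (m : R) : Prop :=
  is_lower_bound S m /\ (forall b, is_lower_bound S b -> b <= m).

Definition Xv (Psi : form -> Prop) (v : valuation) (x : R) : Prop :=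
  exists S, inB Psi v S /\ (is_glb S x \/ is_lub S x).

Definition special (Psi : form -> Prop) (v : valuation) : Prop :=
  forall x, Xv Psi v x -> exists q : Q, x = Q2R q.

(* Main.v *)
Require Import Defs.
From Stdlib Require Import Reals QArith Qreals Lra Lia Classical List.
Open Scope R_scope.

Definition rational (x:R) := exists q:Q, x = Q2R q.

Lemma Q2R_Z z : Q2R (inject_Z z) = IZR z.
Proof. unfold Q2R, inject_Z; simpl. field. Qed.

Lemma rational_Z_plus z x : rational x -> rational (IZR z + x).
Proof. intros [q ->]. exists (inject_Z z + q)%Q. rewrite Q2R_plus, Q2R_Z. reflexivity. Qed.

Lemma rat_dense a b : a < b -> exists q, a < Q2R q < b.
Proof.
  intros Hab. destruct (archimed_cor1 (b - a)) as [N [HN HN0]]; [lra|].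
  assert (HNp : 0 < INR N) by (apply lt_0_INR; lia).
  destruct (archimed (a * INR N)) as [H1 H2].
  exists (inject_Z (up (a * INR N)) * / inject_Z (Z.of_nat N))%Q.
  rewrite Q2R_mult, Q2R_inv, !Q2R_Z, <- INR_IZR_INZ.
  2:{ intro E. apply Qeq_eqR in E. rewrite Q2R_Z, <- INR_IZR_INZ in E.
      unfold Q2R in E; simpl in E. lra. }
  set (z := IZR (up (a * INR N))) in *.
  split.
  - apply (Rmult_lt_reg_r (INR N)); auto. field_simplify; lra.
  - apply (Rmult_lt_reg_r (INR N)); auto. field_simplify; try lra.
    assert (/ INR N * INR N < (b - a) * INR N) by (apply Rmult_lt_compat_r; lra).
    rewrite Rinv_l in H; lra.
Qed.
Definition fl (x:R) : R := IZR (Int_part x).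

Lemma fl_spec x : fl x <= x < fl x + 1.
Proof. unfold fl. destruct (base_Int_part x). lra. Qed.

Lemma Int_part_uniq z x : IZR z <= x < IZR z + 1 -> Int_part x = z.
Proof.
  intros [H1 H2]. destruct (base_Int_part x) as [H3 H4].
  assert (z < Int_part x + 1)%Z by (apply lt_IZR; rewrite plus_IZR; simpl; lra).
  assert (Int_part x < z + 1)%Z by (apply lt_IZR; rewrite plus_IZR; simpl; lra).
  lia.
Qed.

Lemma fl_plus z s : 0 <= s < 1 -> fl (IZR z + s) = IZR z.
Proof. intros. unfold fl. rewrite (Int_part_uniq z); auto; lra. Qed.

Lemma fl_is_Z x : exists z, fl x = IZR z.
Proof. exists (Int_part x); reflexivity. Qed.

Definition auto (h g : R -> R) :=
  (forall x y, x < y -> h x < h y) /\ (forall x, g (h x) = x) /\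
  (forall y, h (g y) = y) /\ (forall x, h (x+1) = h x + 1).

Lemma auto_id : auto (fun x => x) (fun x => x).
Proof. repeat split; intros; auto. Qed.

Lemma auto_comp h1 g1 h2 g2 : auto h1 g1 -> auto h2 g2 ->
  auto (fun x => h2 (h1 x)) (fun y => g1 (g2 y)).
Proof.
  intros (A1&B1&C1&D1) (A2&B2&C2&D2). repeat split; intros.
  - auto.
  - rewrite B2; auto.
  - rewrite C1; auto.
  - rewrite D1, D2; auto.
Qed.

Lemma auto_ext (h g : R -> R) k kk :
  (forall s t, s < t -> k s < k t) ->
  (forall s, kk (k s) = s) -> (forall s, k (kk s) = s) ->
  (forall s, 0 <= s < 1 -> 0 <= k s < 1) ->
  (forall s, 0 <= s < 1 -> 0 <= kk s < 1) ->
  (forall x, h x = fl x + k (x - fl x)) ->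
  (forall x, g x = fl x + kk (x - fl x)) ->
  auto h g.
Proof.
  intros Hk Hkk1 Hkk2 Hr1 Hr2 Hh Hg.
  repeat split.
  - intros x y Hxy. rewrite !Hh.
    destruct (fl_is_Z x) as [m Hm]. destruct (fl_is_Z y) as [n Hn].
    pose proof (fl_spec x). pose proof (fl_spec y).
    rewrite Hm, Hn in *.
    assert (m < n + 1)%Z by (apply lt_IZR; rewrite plus_IZR; simpl; lra).
    destruct (Z.eq_dec m n) as [->|Hne].
    + apply Rplus_lt_compat_l. apply Hk. lra.
    + assert (IZR m + 1 <= IZR n) by (rewrite <- (plus_IZR m 1); apply IZR_le; lia).
      assert (E1: 0 <= x - IZR m < 1) by lra. assert (E2: 0 <= y - IZR n < 1) by lra.
      pose proof (Hr1 _ E1). pose proof (Hr1 _ E2). lra.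
  - intro x. rewrite Hh.
    destruct (fl_is_Z x) as [m Hm]. pose proof (fl_spec x). rewrite Hm in *.
    assert (0 <= x - IZR m < 1) by lra. pose proof (Hr1 _ H0).
    rewrite Hg, fl_plus by auto. replace (IZR m + k (x - IZR m) - IZR m) with (k (x - IZR m)) by ring.
    rewrite Hkk1. ring.
  - intro x. rewrite Hg.
    destruct (fl_is_Z x) as [m Hm]. pose proof (fl_spec x). rewrite Hm in *.
    assert (0 <= x - IZR m < 1) by lra. pose proof (Hr2 _ H0).
    rewrite Hh, fl_plus by auto. replace (IZR m + kk (x - IZR m) - IZR m) with (kk (x - IZR m)) by ring.
    rewrite Hkk2. ring.
  - intro x. rewrite !Hh.
    destruct (fl_is_Z x) as [m Hm]. pose proof (fl_spec x). rewrite Hm in *.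
    replace (x + 1) with (IZR (m + 1) + (x - IZR m)) by (rewrite plus_IZR; simpl; ring).
    rewrite fl_plus by lra. rewrite plus_IZR. simpl.
    replace (IZR m + 1 + (x - IZR m) - (IZR m + 1)) with (x - IZR m) by ring. ring.
Qed.
Definition lin x0 x1 y0 y1 s := y0 + (s - x0) * ((y1 - y0) / (x1 - x0)).

Lemma lin_facts x0 x1 y0 y1 : x0 < x1 -> y0 < y1 ->
  let d := (y1 - y0) / (x1 - x0) in 0 < d /\ (x1 - x0) * d = y1 - y0.
Proof.
  intros. split.
  - unfold d, Rdiv. apply Rmult_lt_0_compat; [lra|]. apply Rinv_0_lt_compat; lra.
  - unfold d. field. lra.
Qed.

Lemma lin_inv x0 x1 y0 y1 s : x0 < x1 -> y0 < y1 ->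
  lin y0 y1 x0 x1 (lin x0 x1 y0 y1 s) = s.
Proof. intros. unfold lin. field. lra. Qed.

Definition bump a b t q s :=
  if Rle_dec s a then s else if Rle_dec b s then s else
  if Rle_dec s t then lin a t a q s else lin t b q b s.

Lemma bump_range a b t q s : a < t < b -> a < q < b ->
  (s <= a /\ bump a b t q s = s) \/ (b <= s /\ bump a b t q s = s) \/
  (a < s <= t /\ a < bump a b t q s <= q /\ bump a b t q s = lin a t a q s) \/
  (t < s < b /\ q < bump a b t q s < b /\ bump a b t q s = lin t b q b s).
Proof.
  intros Ht Hq. unfold bump.
  destruct (Rle_dec s a); [left; split; auto|].
  destruct (Rle_dec b s); [right; left; split; auto|].
  destruct (Rle_dec s t).
  - right; right; left. destruct (lin_facts a t a q) as [Hd He]; try lra.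
    unfold lin. set (d := (q - a) / (t - a)) in *. repeat split; try lra.
    + assert (0 < (s - a) * d) by (apply Rmult_lt_0_compat; lra). lra.
    + assert ((s - a) * d <= (t - a) * d) by (apply Rmult_le_compat_r; lra). lra.
  - right; right; right. destruct (lin_facts t b q b) as [Hd He]; try lra.
    unfold lin. set (d := (b - q) / (b - t)) in *. repeat split; try lra.
    + assert (0 < (s - t) * d) by (apply Rmult_lt_0_compat; lra). lra.
    + assert ((s - t) * d < (b - t) * d) by (apply Rmult_lt_compat_r; lra). lra.
Qed.

Lemma lin_mono x0 x1 y0 y1 s s' : x0 < x1 -> y0 < y1 -> s < s' ->
  lin x0 x1 y0 y1 s < lin x0 x1 y0 y1 s'.
Proof.
  intros. destruct (lin_facts x0 x1 y0 y1) as [Hd _]; auto.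
  unfold lin. set (d := (y1 - y0) / (x1 - x0)) in *.
  assert ((s - x0) * d < (s' - x0) * d) by (apply Rmult_lt_compat_r; lra). lra.
Qed.

Lemma bump_mono a b t q s s' : a < t < b -> a < q < b -> s < s' ->
  bump a b t q s < bump a b t q s'.
Proof.
  intros Ht Hq Hs.
  destruct (bump_range a b t q s) as [(A1&A2)|[(A1&A2)|[(A1&A2&A3)|(A1&A2&A3)]]]; auto;
  destruct (bump_range a b t q s') as [(B1&B2)|[(B1&B2)|[(B1&B2&B3)|(B1&B2&B3)]]]; auto;
  try lra.
  - rewrite A3, B3. apply lin_mono; lra.
  - rewrite A3, B3. apply lin_mono; lra.
Qed.

Lemma bump_inv a b t q s : a < t < b -> a < q < b ->
  bump a b q t (bump a b t q s) = s.
Proof.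
  intros Ht Hq.
  destruct (bump_range a b t q s) as [(A1&A2)|[(A1&A2)|[(A1&A2&A3)|(A1&A2&A3)]]]; auto;
  rewrite A2 || idtac.
  - unfold bump at 1. destruct (Rle_dec s a); [auto|lra].
  - unfold bump at 1. destruct (Rle_dec s a); [auto|]. destruct (Rle_dec b s); [auto|lra].
  - unfold bump at 1. destruct (Rle_dec _ a); [lra|]. destruct (Rle_dec b _); [lra|].
    destruct (Rle_dec _ q); [|lra]. rewrite A3. apply lin_inv; lra.
  - unfold bump at 1. destruct (Rle_dec _ a); [lra|]. destruct (Rle_dec b _); [lra|].
    destruct (Rle_dec _ q); [lra|]. rewrite A3. apply lin_inv; lra.
Qed.
Lemma min_dist (l : list R) t : (forall p, In p l -> p <> t) ->
  exists e, 0 < e /\ forall p, In p l -> e < Rabs (p - t).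
Proof.
  induction l as [|p l IH]; intros H.
  - exists 1. split; [lra|]. intros p [].
  - destruct IH as [e [He H2]]. { intros. apply H. right; auto. }
    assert (Hp : p <> t) by (apply H; left; auto).
    assert (0 < Rabs (p - t)) by (apply Rabs_pos_lt; lra).
    exists (Rmin e (Rabs (p - t) / 2)). split.
    + apply Rmin_pos; lra.
    + intros p' [<-|Hin].
      * pose proof (Rmin_r e (Rabs (p - t) / 2)). lra.
      * pose proof (Rmin_l e (Rabs (p - t) / 2)). specialize (H2 _ Hin). lra.
Qed.

Lemma bump_auto (P : list R) r : (forall y, In y P -> rational y) -> ~ rational r ->
  exists h g, auto h g /\ (forall y, In y P -> h y = y) /\ rational (h r).
Proof.
  intros HP Hr.
  destruct (fl_is_Z r) as [zr Hzr].
  set (t := r - fl r).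
  assert (Hnot : forall p, rational p -> p <> t).
  { intros p [qp ->] E. apply Hr. replace r with (IZR zr + Q2R qp) by (unfold t in E; lra).
    apply rational_Z_plus. exists qp; auto. }
  destruct (min_dist (0 :: 1 :: map (fun y => y - fl y) P) t) as [e [He Hd]].
  { intros p Hin. apply Hnot. destruct Hin as [<-|[<-|Hin]].
    - exists 0%Q. unfold Q2R; simpl; field.
    - exists 1%Q. unfold Q2R; simpl; field.
    - apply in_map_iff in Hin. destruct Hin as [y [<- Hy]].
      destruct (fl_is_Z y) as [zy ->]. destruct (HP y Hy) as [qy ->].
      exists (qy - inject_Z zy)%Q. rewrite Q2R_minus, Q2R_Z. reflexivity. }
  pose proof (fl_spec r) as Hfr.
  assert (H0 := Hd 0 (or_introl eq_refl)).
  assert (H1 := Hd 1 (or_intror (or_introl eq_refl))).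
  assert (Ht0 : 0 <= t < 1) by (unfold t; lra).
  rewrite Rabs_minus_sym in H0.
  rewrite Rabs_right in H0 by lra.
  rewrite Rabs_right in H1 by lra.
  set (a := t - e/2). set (b := t + e/2).
  destruct (rat_dense a b) as [q Hq]; [unfold a, b; lra|].
  assert (Hat : a < t < b) by (unfold a, b; lra).
  set (k := bump a b t (Q2R q)). set (kk := bump a b (Q2R q) t).
  exists (fun x => fl x + k (x - fl x)), (fun x => fl x + kk (x - fl x)).
  split; [|split].
  - apply (auto_ext _ _ k kk); auto.
    + intros. apply bump_mono; auto.
    + intros. apply bump_inv; auto.
    + intros. apply bump_inv; auto.
    + intros s Hs. destruct (bump_range a b t (Q2R q) s) as [(A1&A2)|[(A1&A2)|[(A1&A2&A3)|(A1&A2&A3)]]]; auto;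
      unfold k; unfold a, b in *; lra.
    + intros s Hs. destruct (bump_range a b (Q2R q) t s) as [(A1&A2)|[(A1&A2)|[(A1&A2&A3)|(A1&A2&A3)]]]; try lra;
      unfold kk; unfold a, b in *; lra.
  - intros y Hy. assert (Hin : In (y - fl y) (0 :: 1 :: map (fun y => y - fl y) P))
      by (right; right; apply (in_map (fun y => y - fl y)); auto).
    specialize (Hd _ Hin).
    unfold k. destruct (bump_range a b t (Q2R q) (y - fl y)) as [(A1&A2)|[(A1&A2)|[(A1&A2&A3)|(A1&A2&A3)]]]; auto;
    try (rewrite A2; ring).
    + exfalso. unfold Rabs in Hd. destruct (Rcase_abs _) in Hd; unfold a, b in *; lra.
    + exfalso. unfold Rabs in Hd. destruct (Rcase_abs _) in Hd; unfold a, b in *; lra.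
  - simpl. fold t. unfold k. rewrite Hzr.
    destruct (bump_range a b t (Q2R q) t) as [(A1&A2)|[(A1&A2)|[(A1&A2&A3)|(A1&A2&A3)]]]; try lra.
    rewrite A3. unfold lin. apply rational_Z_plus. exists q.
    field. lra.
Qed.
Lemma rationalize (L : list R) :
  exists h g, auto h g /\ forall x, In x L -> rational (h x).
Proof.
  induction L as [|a L IH].
  - exists (fun x => x), (fun x => x). split; [apply auto_id|]. intros x [].
  - destruct IH as [h1 [g1 [Ha1 HL]]].
    destruct (classic (rational (h1 a))) as [Hr|Hr].
    + exists h1, g1. split; auto. intros x [<-|Hx]; auto.
    + destruct (bump_auto (map h1 L) (h1 a)) as [h2 [g2 [Ha2 [Hfix Hrat]]]]; auto.
      { intros y Hy. apply in_map_iff in Hy. destruct Hy as [x [<- Hx]]. auto. }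
      exists (fun x => h2 (h1 x)), (fun y => g1 (g2 y)). split.
      * apply auto_comp; auto.
      * intros x [<-|Hx]; auto. rewrite Hfix; auto. apply in_map; auto.
Qed.

Definition agree (l : list (R -> Prop)) x y := Forall (fun P => P x <-> P y) l.

Lemma lub_union (A B : R -> Prop) m : is_lub (fun x => A x \/ B x) m -> is_lub A m \/ is_lub B m.
Proof.
  intros [Hub Hl]. apply NNPP. intros Hn. apply not_or_and in Hn. destruct Hn as [HA HB].
  assert (UA : is_upper_bound A m) by (intros x Hx; apply Hub; auto).
  assert (UB : is_upper_bound B m) by (intros x Hx; apply Hub; auto).
  assert (exists b1, is_upper_bound A b1 /\ b1 < m) as [b1 [H1 H1']].
  { apply NNPP; intro N. apply HA. split; auto. intros b Hb. apply Rnot_lt_le. intro. apply N. eauto. }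
  assert (exists b2, is_upper_bound B b2 /\ b2 < m) as [b2 [H2 H2']].
  { apply NNPP; intro N. apply HB. split; auto. intros b Hb. apply Rnot_lt_le. intro. apply N. eauto. }
  assert (m <= Rmax b1 b2).
  { apply Hl. intros x [Hx|Hx].
    - eapply Rle_trans; [apply H1; auto| apply Rmax_l].
    - eapply Rle_trans; [apply H2; auto| apply Rmax_r]. }
  unfold Rmax in H. destruct (Rle_dec b1 b2); lra.
Qed.

Definition is_glb' (S : R -> Prop) m := is_lub (fun x => S (- x)) (- m).

Lemma glb_equiv S m : is_glb S m <-> is_lub (fun x => S (- x)) (- m).
Proof.
  unfold is_glb, is_lower_bound, is_lub, is_upper_bound. split.
  - intros [H1 H2]. split.
    + intros x Hx. specialize (H1 _ Hx). lra.
    + intros b Hb. assert (- b <= m). { apply H2. intros x Hx. assert (- x <= b) by (apply Hb; rewrite Ropp_involutive; auto). lra. } lra.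
  - intros [H1 H2]. split.
    + intros x Hx. assert (- x <= - m) by (apply H1; rewrite Ropp_involutive; auto). lra.
    + intros b Hb. assert (- m <= - b). { apply H2. intros x Hx. specialize (Hb _ Hx). lra. } lra.
Qed.

Lemma glb_union (A B : R -> Prop) m : is_glb (fun x => A x \/ B x) m -> is_glb A m \/ is_glb B m.
Proof.
  rewrite !glb_equiv. intro H. apply (lub_union (fun x => A (- x)) (fun x => B (- x))). exact H.
Qed.

Lemma lub_ext (A B : R -> Prop) m : (forall x, A x <-> B x) -> is_lub A m -> is_lub B m.
Proof.
  intros E [H1 H2]. split.
  - intros x Hx. apply H1, E, Hx.
  - intros b Hb. apply H2. intros x Hx. apply Hb, E, Hx.
Qed.

Lemma glb_ext (A B : R -> Prop) m : (forall x, A x <-> B x) -> is_glb A m -> is_glb B m.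
Proof.
  intros E. rewrite !glb_equiv. apply lub_ext. intros x. apply E.
Qed.

Lemma lub_empty (A : R -> Prop) m : (forall x, ~ A x) -> ~ is_lub A m.
Proof. intros E [_ H]. assert (m <= m - 1) by (apply H; intros x Hx; exfalso; eapply E; eauto). lra. Qed.

Lemma glb_empty (A : R -> Prop) m : (forall x, ~ A x) -> ~ is_glb A m.
Proof. intros E. rewrite glb_equiv. apply lub_empty. intros x. apply E. Qed.

Lemma bounds_of (D : R -> Prop) : exists L, forall m, is_lub D m \/ is_glb D m -> In m L.
Proof.
  destruct (classic (exists m, is_lub D m)) as [[m1 H1]|N1];
  destruct (classic (exists m, is_glb D m)) as [[m2 H2]|N2].
  - exists (m1 :: m2 :: nil). intros m [H|H].
    + left. eapply is_lub_u; eauto.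
    + right; left. rewrite glb_equiv in H, H2. assert (- m2 = - m) by (eapply is_lub_u; eauto). lra.
  - exists (m1 :: nil). intros m [H|H].
    + left. eapply is_lub_u; eauto.
    + exfalso; eauto.
  - exists (m2 :: nil). intros m [H|H].
    + exfalso; eauto.
    + left. rewrite glb_equiv in H, H2. assert (- m2 = - m) by (eapply is_lub_u; eauto). lra.
  - exists nil. intros m [H|H]; exfalso; eauto.
Qed.

Lemma finite_bounds (l : list (R -> Prop)) : forall (D : R -> Prop), exists L,
  forall S m, (forall x, S x -> D x) ->
  (forall x y, D x -> D y -> agree l x y -> (S x <-> S y)) ->
  is_lub S m \/ is_glb S m -> In m L.
Proof.
  induction l as [|P l IH]; intros D.
  - destruct (bounds_of D) as [L HL]. exists L. intros S m HSD Hresp Hm.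
    destruct (classic (exists x0, S x0)) as [[x0 Hx0]|N].
    + apply HL. assert (E : forall x, S x <-> D x).
      { intros x. split; auto. intros Dx. apply (Hresp x x0); auto. constructor. }
      destruct Hm; [left; eapply lub_ext | right; eapply glb_ext]; eauto.
    + exfalso. destruct Hm as [Hm|Hm]; [eapply lub_empty|eapply glb_empty]; eauto.
  - destruct (IH (fun x => D x /\ P x)) as [L1 H1].
    destruct (IH (fun x => D x /\ ~ P x)) as [L2 H2].
    exists (L1 ++ L2). intros S m HSD Hresp Hm.
    apply in_or_app.
    assert (E : forall x, S x <-> (S x /\ P x) \/ (S x /\ ~ P x)).
    { intros x. destruct (classic (P x)); tauto. }
    assert (Hm' : is_lub (fun x => (S x /\ P x) \/ (S x /\ ~ P x)) m \/
                  is_glb (fun x => (S x /\ P x) \/ (S x /\ ~ P x)) m).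
    { destruct Hm; [left; eapply lub_ext | right; eapply glb_ext]; eauto. }
    assert (Hm'' : (is_lub (fun x => S x /\ P x) m \/ is_glb (fun x => S x /\ P x) m) \/
                   (is_lub (fun x => S x /\ ~ P x) m \/ is_glb (fun x => S x /\ ~ P x) m)).
    { destruct Hm' as [Hm'|Hm'].
      - apply lub_union in Hm'. tauto.
      - apply glb_union in Hm'. tauto. }
    destruct Hm'' as [Hm''|Hm''].
    + left. apply (H1 (fun x => S x /\ P x)); auto.
      * intros x [Sx Px]. split; auto.
      * intros x y [Dx Px] [Dy Py] Ag.
        assert (S x <-> S y) by (apply Hresp; auto; unfold agree; constructor; [tauto|exact Ag]). tauto.
    + right. apply (H2 (fun x => S x /\ ~ P x)); auto.
      * intros x [Sx Px]. split; auto.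
      * intros x y [Dx Px] [Dy Py] Ag.
        assert (S x <-> S y) by (apply Hresp; auto; unfold agree; constructor; [tauto|exact Ag]). tauto.
Qed.
Lemma auto_lt h g : auto h g -> forall x z, x < z <-> h x < h z.
Proof.
  intros (A&B&C&D) x z. split; auto. intros H.
  destruct (Rlt_le_dec x z) as [|Hle]; auto. exfalso.
  destruct Hle as [Hlt| ->]; [apply A in Hlt|]; lra.
Qed.

Lemma Rabs_gt1 d : Rabs d > 1 <-> d > 1 \/ d < -1.
Proof. unfold Rabs. destruct (Rcase_abs d); split; intros; lra. Qed.

Lemma auto_rel h g : auto h g -> forall x y, Rgt1 x y <-> Rgt1 (h x) (h y).
Proof.
  intros Ha x y. pose proof Ha as (A&B&C&D). unfold Rgt1. rewrite !Rabs_gt1.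
  assert (E1 : x - y > 1 <-> h x - h y > 1).
  { assert (y + 1 < x <-> h (y + 1) < h x) by (apply (auto_lt h g); auto). rewrite D in H.
    split; intros; [apply H in H0 || idtac|]; lra. }
  assert (E2 : x - y < -1 <-> h x - h y < -1).
  { assert (x + 1 < y <-> h (x + 1) < h y) by (apply (auto_lt h g); auto). rewrite D in H.
    split; intros; lra. }
  tauto.
Qed.

Lemma ext_auto h g (v : valuation) : auto h g -> forall psi y,
  ext (fun n z => v n (g z)) psi y <-> ext v psi (g y).
Proof.
  intros Ha. pose proof Ha as (A&B&C&D).
  induction psi as [n| |a IHa b IHb|a IHa]; intros y; simpl.
  - tauto.
  - tauto.
  - rewrite IHa, IHb. tauto.
  - split.
    + intros [z [Hz Ez]]. exists (g z). split; [|apply IHa; auto].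
      apply (auto_rel h g Ha). rewrite !C. auto.
    + intros [w [Hw Ew]]. exists (h w). split.
      * apply (auto_rel h g Ha) in Hw. rewrite C in Hw. auto.
      * apply IHa. rewrite B. auto.
Qed.

Lemma inB_auto h g (v : valuation) Psi : auto h g -> forall S,
  inB Psi (fun n z => v n (g z)) S -> exists T, inB Psi v T /\ forall y, S y <-> T (g y).
Proof.
  intros Ha S HS. induction HS.
  - exists (ext v psi). split; [constructor; auto|]. apply ext_auto with (h := h); auto.
  - exists (fun _ => False). split; [constructor|]. tauto.
  - destruct IHHS as [T [HT E]]. exists (fun x => ~ T x). split; [constructor; auto|].
    intros y. rewrite E. tauto.
  - destruct IHHS1 as [T1 [HT1 E1]]. destruct IHHS2 as [T2 [HT2 E2]].
    exists (fun x => T1 x \/ T2 x). split; [constructor; auto|].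
    intros y. rewrite E1, E2. tauto.
Qed.

Lemma g_mono h g : auto h g -> forall a b, a <= b -> g a <= g b.
Proof.
  intros Ha a b Hab. pose proof Ha as (A&B&C&D).
  destruct (Rle_lt_dec (g a) (g b)) as [|Hlt]; auto.
  apply A in Hlt. rewrite !C in Hlt. lra.
Qed.

Lemma h_mono h g : auto h g -> forall a b, a <= b -> h a <= h b.
Proof.
  intros Ha a b [Hab| ->]; [left; apply Ha; auto| right; auto].
Qed.

Lemma lub_auto h g S T m : auto h g -> (forall y, S y <-> T (g y)) -> is_lub S m -> is_lub T (g m).
Proof.
  intros Ha E [H1 H2]. pose proof Ha as (A&B&C&D). split.
  - intros w Hw. rewrite <- (B w). apply (g_mono h g Ha). apply H1. apply E. rewrite B. auto.
  - intros b Hb. rewrite <- (B b). apply (g_mono h g Ha). apply H2.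
    intros y Hy. rewrite <- (C y). apply (h_mono h g Ha). apply Hb, E, Hy.
Qed.

Lemma glb_auto h g S T m : auto h g -> (forall y, S y <-> T (g y)) -> is_glb S m -> is_glb T (g m).
Proof.
  intros Ha E [H1 H2]. pose proof Ha as (A&B&C&D). split.
  - intros w Hw. rewrite <- (B w). apply (g_mono h g Ha). apply H1. apply E. rewrite B. auto.
  - intros b Hb. rewrite <- (B b). apply (g_mono h g Ha). apply H2.
    intros y Hy. rewrite <- (C y). apply (h_mono h g Ha). apply Hb, E, Hy.
Qed.

Fixpoint subs (phi : form) : list form :=
  phi :: match phi with
         | Imp a b => subs a ++ subs b
         | Dia a => subs a
         | _ => nil
         end.

Lemma subform_subs psi phi : subform psi phi -> In psi (subs phi).
Proof.
  induction 1; simpl.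
  - destruct phi; simpl; auto.
  - right. apply in_or_app; auto.
  - right. apply in_or_app; auto.
  - right; auto.
Qed.

Lemma inB_resp phi (v : valuation) S : inB (fun psi => subform psi phi) v S ->
  forall x y, agree (map (ext v) (subs phi)) x y -> (S x <-> S y).
Proof.
  intros HS x y Ag. unfold agree in Ag. rewrite Forall_forall in Ag.
  induction HS.
  - apply Ag. apply in_map. apply subform_subs; auto.
  - tauto.
  - rewrite IHHS. tauto.
  - rewrite IHHS1, IHHS2. tauto.
Qed.

Theorem lemma4p4 (phi : form) :
  (exists v : valuation, satisfiable v phi) ->
  exists v : valuation, special (fun psi => subform psi phi) v /\ satisfiable v phi.
Proof.
  intros [v [x0 Hx0]].
  destruct (finite_bounds (map (ext v) (subs phi)) (fun _ => True)) as [L HL].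
  destruct (rationalize L) as [h [g [Ha Hrat]]].
  pose proof Ha as (A&B&C&D).
  exists (fun n z => v n (g z)). split.
  - intros x [S [HS Hb]].
    destruct (inB_auto h g v _ Ha S HS) as [T [HT E]].
    assert (Hin : In (g x) L).
    { apply (HL T).
      - auto.
      - intros x1 y1 _ _ Ag. apply (inB_resp phi v T HT); auto.
      - destruct Hb; [right; apply (glb_auto h g S T x) | left; apply (lub_auto h g S T x)]; auto. }
    apply Hrat in Hin. rewrite C in Hin. exact Hin.
  - exists (h x0). apply (ext_auto h g v Ha). rewrite B. auto.
Qed.
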